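(* Let $p$ be a prime, $n\ge1$, and let $C=\langle a\rangle$ be a cyclic group of order $p^n$. Let $H$ be a finite group acting on $C$ by group automorphisms, and let $Ha$ denote the $H$-orbit of the generator $a$. Then $m_{\mathsf{faithful}}(C\rtimes H)\ge |Ha|$. Moreover, equality holds if $H$ acts faithfully on $C$.
   Context: For a finite group $G$, $m_{\mathsf{faithful}}(G)$ denotes the smallest dimension of a faithful complex representation of $G$. *)

(* Defs.v *)
From HB Require Import structures.
From Stdlib Require Import ClassicalEpsilon.
From mathcomp Require Import all_boot all_order all_algebra all_fingroup all_solvable all_field all_character.
Set Implicit Arguments. Unset Strict Implicit. Unset Printing Implicit Defensive.

(* A faithful complex representation: algC = algebraic closure of Q, the
   standard MathComp stand-in for C (every complex representation of a finite
   group is realizable over algebraic numbers). *)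
Definition has_faithful_repr (gT : finGroupType) (G : {group gT}) (n : nat) : Prop :=
  exists rG : mx_representation algC G n, mx_faithful rG.

(* boolean version (classical decision), needed by ex_minn *)
Definition has_faithful_reprb (gT : finGroupType) (G : {group gT}) (n : nat) : bool :=
  if excluded_middle_informative (has_faithful_repr G n) then true else false.

Lemma has_faithful_reprbP (gT : finGroupType) (G : {group gT}) n :
  reflect (has_faithful_repr G n) (has_faithful_reprb G n).
Proof. by rewrite /has_faithful_reprb; case: excluded_middle_informative => h; constructor. Qed.

Lemma has_faithful_repr_ex (gT : finGroupType) (G : {group gT}) :
  exists n, has_faithful_reprb G n.
Proof.
exists #|G|; apply/has_faithful_reprbP.
by exists (regular_repr algC G); apply: regular_mx_faithful.
Qed.

Definition m_faithful (gT : finGroupType) (G : {group gT}) : nat :=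
  ex_minn (has_faithful_repr_ex G).

(* Main.v *)
Require Import Defs.
From HB Require Import structures.
From mathcomp Require Import all_boot all_order all_algebra all_fingroup all_solvable all_field all_character.
Set Implicit Arguments. Unset Strict Implicit. Unset Printing Implicit Defensive.
Section PartA.
Import Order.TTheory GRing.Theory Num.Theory.
Local Open Scope ring_scope.
Lemma faithful_constt (gT : finGroupType) (p n : nat) (C G : {group gT}) (a : gT) d
  (rG : mx_representation algC G d) :
  prime p -> (1 <= n)%N -> C \subset G -> C = <[a]>%G -> #|C| = (p ^ n)%N -> mx_faithful rG ->
  exists2 j : Iirr C, j \in irr_constt ('Res[C] (cfRepr rG)) & cfaithful 'chi_j.
Proof.
move=> pr_p n1 sCG defC cardC ffrG.
set psi := 'Res[C] (cfRepr rG).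
have psiC : psi \is a character by rewrite cfRes_char ?cfRepr_char.
have kpsi : (cfker psi \subset [1 gT])%g by
  rewrite cfker_Res ?cfRepr_char // cfker_repr subIset //; apply/orP; right; exact: ffrG.
have oa : #[a]%g = (p ^ n)%N by rewrite orderE -cardC defC.
set z := (a ^+ (p ^ n.-1)%N)%g.
have oz : #[z]%g = p.
  rewrite orderXdiv oa; last by rewrite dvdn_exp2l // leq_pred.
  by rewrite -(prednK n1) expnS mulnK // expn_gt0 prime_gt0.
have zC : z \in C by rewrite defC mem_cycle.
have z1 : z != 1%g by apply: contraTneq (prime_gt1 pr_p) => ez; rewrite -oz ez order1.
have [j jS zj] : exists2 j : Iirr C, j \in irr_constt psi & z \notin cfker 'chi_j.
  apply/exists_inP; apply: contraR z1; rewrite negb_exists_in => /forall_inP Hall.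
  have : z \in cfker psi.
    rewrite cfkerEchar // inE zC /=; apply/eqP.
    rewrite [psi]cfun_sum_constt !sum_cfunE; apply: eq_bigr => i iS.
    by rewrite !cfunE cfker1 //; have := Hall i iS; rewrite negbK.
  by move/(subsetP kpsi); rewrite inE.
exists j => //; rewrite cfaithfulE.
set K := cfker 'chi_j.
have sKC : K \subset C := cfker_sub _.
apply: contraR zj => /subsetPn [y yK y1].
have K1 : (1 < #|K|)%N.
  rewrite cardG_gt1; apply/trivgPn; exists y => //.
  by apply: contra y1 => /eqP ->; rewrite group1.
have pK : (p %| #|K|)%N.
  have : (#|K| %| p ^ n)%N by rewrite -cardC cardSg.
  case/(@dvdn_pfactor p _ n pr_p) => m _ eK; rewrite eK in K1 *.
  case: m {eK} K1 => [|m] //; by rewrite expnS dvdn_mulr.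
have [w wK ow] := Cauchy pr_p pK.
have cycC : cyclic C by rewrite defC cycle_cyclic.
have wC : w \in C := subsetP sKC w wK.
have eq : (<[w]>%g == <[z]>%g :> {set gT}).
  by rewrite (eq_subG_cyclic cycC) ?cycle_subG //= -!orderE ow oz.
have : z \in <[w]>%g by rewrite (eqP eq) cycle_id.
by move/(subsetP (_ : <[w]>%g \subset K)); apply; rewrite cycle_subG.
Qed.
Lemma lower_bound (gT : finGroupType) (p n : nat) (C H G : {group gT}) (a : gT) d
  (rG : mx_representation algC G d) :
  prime p -> (1 <= n)%N -> (C ><| H)%g = G -> C = <[a]>%G -> #|C| = (p ^ n)%N -> mx_faithful rG ->
  (#|(a ^: H)%g| <= d)%N.
Proof.
move=> pr_p n1 defG defC cardC ffrG.
have [nCG sHG _ nCH _] := sdprod_context defG.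
have sCG : C \subset G := normal_sub nCG.
have [j jS ffj] := faithful_constt pr_p n1 sCG defC cardC ffrG.
set psi := 'Res[C] (cfRepr rG) in jS.
have psiC : psi \is a character by rewrite cfRes_char ?cfRepr_char.
have linC : forall i : Iirr C, 'chi_i \is a linear_char.
  by apply/char_abelianP; rewrite defC cycle_abelian.
have leS : (#|irr_constt psi| <= d)%N.
  rewrite -(ler_nat algC) -(cfRepr1 rG) -(cfRes1 C) -/psi.
  rewrite [psi in X in (_ <= X)%R]cfun_sum_constt sum_cfunE -sumr_const.
  apply: ler_sum => i iS; rewrite cfunE lin_char1 // mulr1.
  have /natrP[m em] := Cnat_cfdot_char_irr i psiC.
  move: iS; rewrite irr_consttE em.
  by case: m {em} => [|m]; rewrite ?eqxx // ler1n.
apply: leq_trans leS.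
have aC : a \in C by rewrite defC cycle_id.
pose hx (x : gT) := odflt 1%g [pick h in H | (a ^ h)%g == x].
have hxP : forall x, x \in (a ^: H)%g -> hx x \in H /\ (a ^ hx x)%g = x.
  move=> x /imsetP [h hH ->]; rewrite /hx; case: pickP => [h' /andP[h'H /eqP]|] //=.
  by move/(_ h); rewrite hH eqxx.
pose F x := conjg_Iirr j (hx x)^-1.
have FE : forall x, x \in (a ^: H)%g -> 'chi_(F x) a = 'chi_j x.
  move=> x /hxP [hH ex]; rewrite conjg_IirrE cfConjgE ?invgK ?ex //.
  by rewrite groupV (subsetP nCH).
have xC : forall x, x \in (a ^: H)%g -> x \in C.
  by move=> x /hxP [hH <-]; rewrite memJ_norm // (subsetP nCH).
rewrite -(card_in_imset (f := F)); last first.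
  move=> x y xH yH /(congr1 (fun i => 'chi_i a)); rewrite !FE // => exy.
  have : (x * y^-1)%g \in cfker 'chi_j.
    rewrite cfkerEchar ?irr_char // inE groupM ?groupV ?xC //=.
    rewrite lin_charM ?groupV ?xC // lin_charV ?xC // exy lin_char1 //.
    by rewrite mulfV // lin_char_neq0 ?xC.
  move: ffj; rewrite cfaithfulE => /subsetP H1 /H1 /set1P /eqP.
  by rewrite mulg_eq1 => /eqP ->; rewrite invgK.
apply: subset_leq_card; apply/subsetP => _ /imsetP [x xH ->].
have [hH _] := hxP x xH.
rewrite irr_consttE conjg_IirrE cfdot_Res_conjg -?irr_consttE //.
by rewrite groupV (subsetP sHG).
Qed.
End PartA.
Section Up.
Import GRing.Theory Num.Theory.
Local Open Scope ring_scope.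
Lemma upper_bound (gT : finGroupType) (p n : nat) (C H G : {group gT}) (a : gT) :
  prime p -> (1 <= n)%N -> (C ><| H)%g = G -> C = <[a]>%G -> #|C| = (p ^ n)%N ->
  has_faithful_repr G #|H|.
Proof.
move=> pr_p n1 defG defC cardC.
have [nCG sHG _ nCH _] := sdprod_context defG.
have sCG : C \subset G := normal_sub nCG.
have [j _ ffj] := faithful_constt pr_p n1 sCG defC cardC (regular_mx_faithful algC G).
have phiC : 'Ind[G] 'chi_j \is a character by rewrite cfInd_char ?irr_char.
have [[d rG] erG] := char_reprP phiC.
have dH : d = #|H|.
  apply/eqP; rewrite -(eqr_nat algC) -(cfRepr1 rG) /= -erG cfInd1 //.
  have linC : 'chi_j \is a linear_char.
    by apply/char_abelianP; rewrite defC cycle_abelian.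
  by rewrite lin_char1 // mulr1 -(index_sdprod defG).
rewrite -dH; exists rG.
rewrite /mx_faithful -cfker_repr -erG cfker_Ind_irr //.
apply: subset_trans (gcore_sub _ _) _; rewrite -cfaithfulE //.
Qed.
End Up.

Theorem proposition1p4 (gT : finGroupType) (p n : nat) (C H G : {group gT}) (a : gT) :
  prime p -> 1 <= n ->
  (C ><| H)%g = G -> C = <[a]>%G -> #|C| = p ^ n ->
  #|(a ^: H)%g| <= m_faithful G /\
  ('C_H(C)%g = 1%g -> m_faithful G = #|(a ^: H)%g|).
Proof.
move=> pr_p n1 defG defC cardC.
have lb : #|(a ^: H)%g| <= m_faithful G.
  rewrite /m_faithful; case: ex_minnP => m /has_faithful_reprbP [rG ffrG] _.
  exact: lower_bound pr_p n1 defG defC cardC ffrG.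
split=> // cH.
have eH : #|(a ^: H)%g| = #|H|.
  have eC : 'C_H[a]%g = 'C_H(C)%g by rewrite defC /= cent_cycle.
  by rewrite -index_cent1 eC cH indexg1.
apply/eqP; rewrite eqn_leq lb andbT eH.
rewrite /m_faithful; case: ex_minnP => m _; apply.
apply/has_faithful_reprbP; exact: upper_bound pr_p n1 defG defC cardC.
Qed.
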